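(* Let $q,r,\nu$ be positive integers with $r\ge q$ and $\nu\ge q$. There exists a matrix $C\in\mathbb{R}^{\nu r\times q}$ not depending on $z$ such that $\mathcal{M}^0(z)C=I_q$ for all $z$; consequently for every $b\in\mathbb{R}^q$ the equation $\mathcal{M}^0(z)X=b$ has the $z$-independent solution $X=Cb$. Such a constant matrix $C$ is unique iff $\nu=q$. In all cases one can take $C=(I_\nu\otimes D_r^{-1})\mathcal{B}^0D_q^{-1}$.
   Context: Matrix indices start at $0$. $u(z)=(1,\dots,z^{q-1})^\top$, $w(z)=(1,\dots,z^{r-1})$, $M(z)=u(z)w(z)$, and $\mathcal{M}^0(z)=(M(z),M'(z),\dots,M^{(\nu-1)}(z))\in\mathbb{C}^{q\times\nu r}$. $D_n=\mathrm{diag}(0!,\dots,(n-1)!)$. $B^k\in\mathbb{R}^{r\times q}$ has entries $B^k_{ij}=(-1)^i\binom{q}{k+1}$ if $i+j=k$ and $0$ otherwise, and $\mathcal{B}^0\in\mathbb{R}^{\nu r\times q}$ stacks $B^0,\dots,B^{\nu-1}$ vertically. *)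

(* Defs.v *)
From HB Require Import structures.
From mathcomp Require Import all_boot all_order all_algebra.
From mathcomp Require Import reals.
From mathcomp Require Import complex mxtens.
Set Implicit Arguments. Unset Strict Implicit. Unset Printing Implicit Defensive.
Import Order.TTheory GRing.Theory Num.Theory.
Local Open Scope ring_scope.

(* Matrix indices start at 0.  R : realType plays the role of the reals,
   R[i] = complex R the complex numbers. *)

Section Defs.
Variable R : realType.
Local Notation C := (R[i]).

Definition upoly (q : nat) : 'cV[{poly C}]_q := \col_(i < q) 'X^i.
Definition wpoly (r : nat) : 'rV[{poly C}]_r := \row_(j < r) 'X^j.
Definition Mpoly (q r : nat) : 'M[{poly C}]_(q, r) := upoly q *m wpoly r.

Definition Mder (q r k : nat) (z : C) : 'M[C]_(q, r) :=
  map_mx (fun p : {poly C} => (p^`(k)).[z]) (Mpoly q r).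

(* M^0(z) = (M(z), M'(z), ..., M^(nu-1)(z)) in C^{q x nu r}:
   column c = k*r + j (k < nu, j < r) is column j of M^(k)(z). *)
Definition Mcal0 (q r nu : nat) (z : C) : 'M[C]_(q, nu * r) :=
  \matrix_(i < q, c < nu * r)
     Mder q r (mxtens_unindex c).1 z i (mxtens_unindex c).2.

Definition Dn (n : nat) : 'M[R]_n := diag_mx (\row_(i < n) (i`!)%:R).

Definition Bk (q r k : nat) : 'M[R]_(r, q) :=
  \matrix_(i < r, j < q)
     (if (i + j == k)%N then (-1) ^+ i * ('C(q, k.+1))%:R else 0).

Definition Bcal0 (q r nu : nat) : 'M[R]_(nu * r, q) :=
  \matrix_(c < nu * r, j < q) Bk q r (mxtens_unindex c).1 (mxtens_unindex c).2 j.

Definition Cexpl (q r nu : nat) : 'M[R]_(nu * r, q) :=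
  ((1%:M : 'M[R]_nu) *t invmx (Dn r)) *m Bcal0 q r nu *m invmx (Dn q).

Definition toC (m n : nat) (A : 'M[R]_(m, n)) : 'M[C]_(m, n) :=
  map_mx (real_complex R) A.

Definition const_rinv (q r nu : nat) (X : 'M[R]_(nu * r, q)) : Prop :=
  forall z : C, Mcal0 q r nu z *m toC X = 1%:M.
End Defs.
Arguments Mcal0 {R} q r nu z.
Arguments Cexpl {R} q r nu.
Arguments toC {R m n} A.
Arguments const_rinv {R q r nu} X.
Arguments Dn {R} n.
Arguments Bcal0 {R} q r nu.
Arguments Bk {R} q r k.

(* Main.v *)
Require Import Defs.
From HB Require Import structures.
From mathcomp Require Import all_boot all_order all_algebra.
From mathcomp Require Import reals.
From mathcomp Require Import complex mxtens.
From mathcomp Require Import zify ring lra.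
Import GRing.Theory Num.Theory.
Local Open Scope ring_scope.

Lemma sum_tens (T : nmodType) m n (F : 'I_(m * n) -> T) :
  \sum_(c < m * n) F c = \sum_(k < m) \sum_(j < n) F (mxtens_index (k, j)).
Proof.
rewrite pair_big /=. rewrite (reindex (@mxtens_index m n)) /=; last first.
exists (@mxtens_unindex m n) => i _; first exact: mxtens_indexK.
exact: mxtens_unindexK.
by apply: eq_bigr => -[].
Qed.

Lemma Mcal0E (R : realType) q r nu (z : R[i]) i k j :
  Mcal0 q r nu z i (mxtens_index (k, j)) = z ^+ (i + j - k) *+ (i + j) ^_ k.
Proof.
rewrite /Mcal0 mxE mxtens_indexK /Mder mxE /Mpoly mxE big_ord1 !mxE.
by rewrite -exprD derivnXn hornerMn hornerXn.
Qed.

Lemma invDn (R : realType) n :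
  invmx (Dn n : 'M[R]_n) = diag_mx (\row_(i < n) ((i`!)%:R)^-1).
Proof.
have H : (Dn n : 'M[R]_n) *m diag_mx (\row_(i < n) ((i`!)%:R)^-1) = 1%:M.
  rewrite /Dn mulmx_diag; apply/matrixP => i j; rewrite !mxE.
  by rewrite mulfV ?pnatr_eq0 -?lt0n ?fact_gt0.
have [U _] := mulmx1_unit H.
by rewrite -[RHS]mul1mx -(mulVmx U) -mulmxA H mulmx1.
Qed.

Lemma CexplE (R : realType) q r nu k j l :
  Cexpl q r nu (mxtens_index (k, j)) l =
  ((j`!)%:R)^-1 * (if (j + l == k)%N then (-1) ^+ j * ('C(q, k.+1))%:R else 0)
   * ((l`!)%:R)^-1 :> R.
Proof.
rewrite /Cexpl !invDn mul_mx_diag mxE [(\row__ _) 0 l]mxE; congr (_ * _).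
rewrite mxE sum_tens (bigD1 k) //= [X in _ + X]big1 ?addr0; last first.
  move=> k' /negPf nk; apply: big1 => j' _.
  by rewrite tensmxE mxE eq_sym nk mul0r mul0r.
rewrite (bigD1 j) //= [X in _ + X]big1 ?addr0; last first.
  by move=> j' /negPf nj; rewrite tensmxE [diag_mx _ _ _]mxE eq_sym nj mulr0n mulr0 mul0r.
rewrite tensmxE !mxE !eqxx mxtens_indexK mul1r mulr1n.
by [].
Qed.
Definition G (T : pzRingType) (a n Q : nat) : T :=
  \sum_(m < n.+1) (-1) ^+ m * ('C(a + m, m))%:R * ('C(Q, n - m))%:R.

Lemma G0 (T : pzRingType) a Q : G T a 0 Q = 1.
Proof. by rewrite /G big_ord1 /= addn0 !bin0 expr0 !mul1r. Qed.

Lemma Gb (T : pzRingType) n Q : G T 0 n.+1 Q = ('C(Q, n.+1))%:R - G T 0 n Q.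
Proof.
rewrite /G big_ord_recl /= binn expr0 !mul1r subn0; congr (_ + _).
rewrite -sumrN; apply: eq_bigr => m _ /=.
by rewrite !add0n !binn subSS exprS !mulN1r !mulr1 mulNr.
Qed.

Lemma Ga (T : pzRingType) a n Q :
  G T a.+1 n.+1 Q = G T a n.+1 Q - G T a.+1 n Q.
Proof.
rewrite /G big_ord_recl [X in _ = X - _]big_ord_recl /= !addn0 !bin0 subn0.
rewrite -addrA; congr (_ + _).
rewrite -sumrN -big_split; apply: eq_bigr => m _ /=.
rewrite subSS /bump /= !add1n addnS binS natrD !exprS !mulN1r.
rewrite addSn -addnS.
by rewrite mulrDr mulrDl !mulNr.
Qed.

Lemma G_eq (T : pzRingType) a s n : G T a n (a + 1 + s) = ('C(s, n))%:R.
Proof.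
elim: a s n => [|a IHa] s n.
  elim: n => [|n IHn]; first by rewrite G0 bin0.
  by rewrite Gb IHn add0n add1n binS natrD addrK.
elim: n => [|n IHn]; first by rewrite G0 bin0.
rewrite Ga IHn.
have -> : (a.+1 + 1 + s = a + 1 + s.+1)%N by lia.
by rewrite IHa binS natrD addrK.
Qed.

Lemma S_eq (T : pzRingType) q i l N : (l <= i)%N -> (i < q)%N -> (q - l <= N)%N ->
  \sum_(j < N) (-1) ^+ j * ('C(i + j, j))%:R * ('C(q, j + l + 1))%:R
  = (i == l)%:R :> T.
Proof.
move=> li iq hN.
set F := fun j : nat => (-1) ^+ j * ('C(i + j, j))%:R * ('C(q, j + l + 1))%:R : T.
transitivity (\sum_(j < q - l) F j).
  rewrite (big_ord_widen N F hN) [RHS]big_mkcond /=; apply: eq_bigr => j _.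
  case: ifP => // /negbT; rewrite -leqNgt => h.
  by rewrite /F [X in _ * X%:R]bin_small ?mulr0 //; lia.
have -> : (q - l = (q - l - 1).+1)%N by lia.
transitivity (G T i (q - l - 1) q).
  rewrite /G; apply: eq_bigr => m _; rewrite /F; congr (_ * _%:R).
  have -> : (q - l - 1 - m = q - (m + l + 1))%N by move: (ltn_ord m); lia.
  by rewrite bin_sub //; move: (ltn_ord m); lia.
have E : (i + 1 + (q - i - 1) = q)%N by lia.
have := G_eq T i (q - i - 1) (q - l - 1); rewrite E => ->.
case: eqP => [->|/eqP ne]; first by rewrite binn.
by rewrite bin_small //; lia.
Qed.

Lemma ffact_split i j l : (l <= i)%N ->
  (i + j) ^_ (j + l) = ('C(i + j, j) * 'C(i, l) * j`! * l`!)%N.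
Proof.
move=> li; apply/eqP; rewrite -(eqn_pmul2r (fact_gt0 (i - l))); apply/eqP.
have -> : (i - l = i + j - (j + l))%N by lia.
rewrite ffact_fact; last by lia.
have h1 := bin_fact li.
have h2 := bin_fact (leq_addl i j).
rewrite (_ : (i + j - j = i)%N) in h2; last by lia.
rewrite -h2 -h1.
have -> : (i + j - (j + l) = i - l)%N by lia.
ring.
Qed.

Lemma alg_aux (R : realType) (x y a b c d : R) : x != 0 -> y != 0 ->
 b * c * x * y * (x^-1 * (a * d) / y) = c * (a * b * d).
Proof. move=> hx hy. field. by rewrite hx hy. Qed.

Lemma Cexpl_rinv (R : realType) q r nu : (q <= r)%N -> (q <= nu)%N ->
  const_rinv (Cexpl (R:=R) q r nu).
Proof.
move=> qr qnu z; apply/matrixP => i l.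
rewrite mxE sum_tens exchange_big /=.
pose X (j : nat) := ((j`!)%:R^-1 * ((-1) ^+ j * ('C(q, j + l + 1))%:R)
   * (l`!)%:R^-1 : R).
transitivity (\sum_(j < r) z ^+ (i - l) *+ (i + j) ^_ (j + l) * real_complex R (X j)).
  apply: eq_bigr => j _.
  case: (ltnP (j + l) nu) => h.
    rewrite (bigD1 (Ordinal h)) //= big1 ?addr0.
      rewrite Mcal0E mxE CexplE /= eqxx /X addn1.
      by rewrite (_ : (i + j - (j + l) = i - l)%N) //; lia.
    move=> k nk; rewrite [toC _ _ _]mxE CexplE ifF ?mulr0 ?mul0r ?rmorph0 ?mulr0 //.
    apply/negP => /eqP e; move/eqP: nk; apply; apply: val_inj; by rewrite /= e.
  rewrite big1; last first.
    move=> k _; rewrite [toC _ _ _]mxE CexplE ifF ?mulr0 ?mul0r ?rmorph0 ?mulr0 //.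
    by apply/negP => /eqP e; move: (ltn_ord k); lia.
  by rewrite /X bin_small ?mulr0 ?mul0r ?rmorph0 ?mulr0 //; lia.
case: (ltnP i l) => il.
  rewrite big1; last by move=> j _; rewrite ffact_small ?mulr0n ?mul0r //; lia.
  rewrite mxE (_ : (i == l) = false) ?mulr0n //.
  by apply/eqP => e; move: il; rewrite e ltnn.
transitivity (\sum_(j < r) z ^+ (i - l) * real_complex R
   (('C(i, l))%:R * ((-1) ^+ j * ('C(i + j, j))%:R * ('C(q, j + l + 1))%:R))).
  apply: eq_bigr => j _.
  rewrite ffact_split // -mulr_natr -mulrA; congr (_ * _).
  rewrite -(rmorph_nat (real_complex R)) -rmorphM; congr (real_complex R _).
  rewrite /X !natrM.
  have hj : ((j`!)%:R : R) != 0 by rewrite pnatr_eq0 -lt0n fact_gt0.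
  have hl : ((l`!)%:R : R) != 0 by rewrite pnatr_eq0 -lt0n fact_gt0.
  exact: alg_aux.
rewrite -mulr_sumr -rmorph_sum -mulr_sumr S_eq //; last by lia.
rewrite mxE; case: eqP => [e|ne].
  rewrite (_ : i = l); last exact: val_inj.
  by rewrite eqxx subnn expr0 mul1r binn mulr1 rmorph1.
rewrite (_ : (i == l) = false) ?mulr0 ?rmorph0 ?mulr0 //.
by apply/eqP => e; apply: ne; rewrite e.
Qed.
Lemma poly_eval0 (T : numDomainType) (p : {poly T}) : (forall z, p.[z] = 0) -> p = 0.
Proof.
move=> h; apply/eqP; apply/negPn/negP => pn0.
set rs := [seq (n%:R : T) | n <- iota 0 (size p)].
have H1 : all (root p) rs by apply/allP => x /mapP [n _ ->]; apply/rootP/h.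
have H2 : uniq rs.
  by rewrite map_inj_uniq ?iota_uniq // => m n /eqP; rewrite eqr_nat => /eqP.
by have := max_poly_roots pn0 H1 H2; rewrite size_map size_iota ltnn.
Qed.

Lemma derivn_Xmul (T : nzRingType) (g : {poly T}) n :
  ('X * g)^`(n) = 'X * g^`(n) + g^`(n.-1) *+ n.
Proof.
elim: n => [|n IH]; first by rewrite !derivn0 mulr0n addr0.
rewrite derivnS IH derivD derivM derivX mul1r derivMn -derivnS.
case: n IH => [|n] IH; first by rewrite !mulr0n addr0 mulr1n addrC.
rewrite -derivnS /= (mulrS _ n.+1) (mulrS _ n).
by rewrite !addrA; congr (_ + _); congr (_ + _); rewrite addrC.
Qed.

Lemma kernel0 (R : realType) q r (Z : 'M[R]_(q * r, q)) :
  (forall z, Mcal0 q r q z *m toC Z = 0) -> Z = 0.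
Proof.
move=> hZ; apply/matrixP => c l; rewrite [RHS]mxE.
case: (mxtens_indexP c) => k0 j0.
pose y (k : 'I_q) (j : 'I_r) := real_complex R (Z (mxtens_index (k, j)) l).
pose p (k : 'I_q) : {poly R[i]} := \sum_(j < r) y k j *: 'X^j.
pose Q (i m : nat) := \sum_(k < q) ('X^i * p k)^`(k - m) *+ k ^_ m.
have hT : forall i z, (i < q)%N -> (Q i 0).[z] = 0.
  move=> i z iq; have := congr1 (fun M : 'M[R[i]]_(q, q) => M (Ordinal iq) l) (hZ z).
  rewrite mxE [RHS]mxE sum_tens => <-.
  rewrite /Q horner_sum; apply: eq_bigr => k _.
  rewrite ffactn0 mulr1n subn0 /p mulr_sumr raddf_sum horner_sum.
  apply: eq_bigr => j _.
  rewrite Mcal0E [toC _ _ _]mxE -scalerAr /= derivnZ hornerZ -exprD derivnXn.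
  by rewrite hornerMn hornerXn mulrC.
have hrec : forall i m, Q i m.+1 = Q i.+1 m - 'X * Q i m.
  move=> i m; rewrite /Q mulr_sumr -sumrB; apply: eq_bigr => k _.
  rewrite exprS -mulrA derivn_Xmul mulrnDl mulrnAr addrAC subrr add0r.
  by rewrite -mulrnA subnS ffactnSr mulnC.
have hQ0 : forall m i z, (i + m < q)%N -> (Q i m).[z] = 0.
  elim=> [|m IH] i z h; first by apply: hT; rewrite addn0 in h.
  rewrite hrec hornerD hornerN hornerM hornerX IH ?IH ?mulr0 ?subrr //; lia.
have hp : forall t (k : 'I_q), (q - t <= k)%N -> p k = 0.
  elim=> [|t IH] k hk.
    by move: (ltn_ord k); rewrite subn0 in hk; lia.
  case: (leqP (q - t) k) => hk'; first exact: IH.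
  have ek : (k = q - t - 1 :> nat)%N by lia.
  have HQ : Q 0%N (q - t - 1)%N = p k *+ (q - t - 1)`!.
    rewrite /Q (bigD1 k) //= big1 ?addr0.
      by rewrite expr0 mul1r ek subnn derivn0 ffactnn.
    move=> k' nk'; case: (ltnP k' (q - t - 1)%N) => h.
      by rewrite ffact_small ?mulr0n.
    rewrite IH ?mulr0 ?raddf0 ?mul0rn //.
    have : (k' != k :> nat) by [].
    lia.
  apply: poly_eval0 => z.
  have := hQ0 (q - t - 1)%N 0%N z; rewrite HQ hornerMn add0n => /(_ _)/eqP.
  rewrite mulrn_eq0 => /(_ _)/orP []; [lia | | by move=> /eqP].
  by rewrite eqn0Ngt fact_gt0.
have := hp q k0; rewrite subnn => /(_ isT) pk0.
have := congr1 (fun P : {poly R[i]} => P`_j0) pk0.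
rewrite coef0 /p coef_sum (bigD1 j0) //= big1 ?addr0.
  rewrite coefZ coefXn eqxx mulr1 /y => /eqP.
  by rewrite -(rmorph0 (real_complex R)) => /eqP /complexI.
by move=> j nj; rewrite coefZ coefXn val_eqE eq_sym (negPf nj) mulr0.
Qed.

Lemma toC_add (R : realType) m n (A B : 'M[R]_(m, n)) : toC (A + B) = toC A + toC B.
Proof. by apply/matrixP => i j; rewrite !mxE rmorphD. Qed.

Lemma toC_sub (R : realType) m n (A B : 'M[R]_(m, n)) : toC (A - B) = toC A - toC B.
Proof. by apply/matrixP => i j; rewrite !mxE rmorphB. Qed.

Lemma toC_mul (R : realType) m n p (A : 'M[R]_(m, n)) (B : 'M[R]_(n, p)) :
  toC (A *m B) = toC A *m toC B.
Proof. exact: map_mxM. Qed.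

Theorem proposition7p1 (R : realType) (q r nu : nat) :
  (0 < q)%N -> (0 < r)%N -> (0 < nu)%N -> (q <= r)%N -> (q <= nu)%N ->
  [/\ (exists X : 'M[R]_(nu * r, q),
         const_rinv X /\
         (forall (b : 'cV[R]_q) (z : R[i]),
             Mcal0 q r nu z *m toC (X *m b) = toC b)),
      ((forall X Y : 'M[R]_(nu * r, q), const_rinv X -> const_rinv Y -> X = Y)
         <-> nu = q)
    & const_rinv (Cexpl (R:=R) q r nu)].
Proof.
move=> q0 r0 nu0 qr qnu.
have HC := @Cexpl_rinv R q r nu qr qnu.
split => //.
  exists (Cexpl q r nu); split => // b z.
  by rewrite toC_mul mulmxA HC mul1mx.
split; last first.
  move=> e; subst nu => X Y hX hY; apply/eqP; rewrite -subr_eq0; apply/eqP.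
  apply: kernel0 => z; by rewrite toC_sub mulmxBr hX hY subrr.
move=> H; apply/eqP; rewrite eqn_leq qnu andbT leqNgt; apply/negP => qn.
pose idx := mxtens_index (Ordinal qn, Ordinal r0).
pose D : 'M[R]_(nu * r, q) := \matrix_(c, l) ((c == idx)%:R).
have hD : forall z, Mcal0 q r nu z *m toC D = 0.
  move=> z; apply/matrixP => i l; rewrite !mxE (bigD1 idx) //= big1 ?addr0.
    by rewrite Mcal0E ffact_small ?mulr0n ?mul0r //= addn0.
  by move=> c nc; rewrite !mxE (negPf nc) rmorph0 mulr0.
have hY : const_rinv (Cexpl q r nu + D).
  by move=> z; rewrite toC_add mulmxDr HC hD addr0.
move: (H _ _ HC hY) => /eqP; rewrite -subr_eq0 opprD addrA subrr add0r oppr_eq0 => /eqP /matrixP /(_ idx (Ordinal q0)).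
by rewrite !mxE eqxx => /eqP; rewrite oner_eq0.
Qed.
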